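(* Let $R$ be a commutative ring with identity and $n$ a positive integer. If $R[X]_A$ satisfies the ascending chain condition on $n$-generated ideals, then so does $R$.
   Context: $X$ is an indeterminate over $R$, $A=\{f\in R[X]\mid f(0)=1\}$, and $R[X]_A$ is the localization of $R[X]$ at $A$. An ideal is $n$-generated if it is generated by $n$ elements; a ring satisfies the $n$-ascending chain condition if every ascending chain of $n$-generated ideals stabilizes. *)

(* Defs.v *)
From mathcomp Require Import all_boot all_order all_algebra.
Set Implicit Arguments. Unset Strict Implicit. Unset Printing Implicit Defensive.
Import GRing.Theory.
Local Open Scope ring_scope.

Definition gen_ideal (R : comNzRingType) (n : nat) (a : 'I_n -> R) : R -> Prop :=
  fun x => exists r : 'I_n -> R, x = \sum_(i < n) r i * a i.

Definition n_acc (R : comNzRingType) (n : nat) : Prop :=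
  forall a : nat -> 'I_n -> R,
    (forall k x, gen_ideal (a k) x -> gen_ideal (a k.+1) x) ->
    exists N, forall k, (N <= k)%N -> forall x, gen_ideal (a k) x <-> gen_ideal (a N) x.

(* A fraction is a pair (numerator, denominator); it is an element of S^{-1}T
   when its denominator lies in S.  Two fractions (a,s), (b,t) represent the
   same element iff u (a t - b s) = 0 for some u in S. *)

Definition frac (T : comNzRingType) := (T * T)%type.
Definition frac_ok (T : comNzRingType) (S : pred T) (x : frac T) := S x.2.
Definition frac_eq (T : comNzRingType) (S : pred T) (x y : frac T) : Prop :=
  exists2 u, S u & u * (x.1 * y.2 - y.1 * x.2) = 0.
Definition frac_add (T : comNzRingType) (x y : frac T) : frac T :=
  (x.1 * y.2 + y.1 * x.2, x.2 * y.2).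
Definition frac_mul (T : comNzRingType) (x y : frac T) : frac T :=
  (x.1 * y.1, x.2 * y.2).
Definition frac_zero (T : comNzRingType) : frac T := (0, 1).

Definition loc_gen_ideal (T : comNzRingType) (S : pred T) (n : nat)
    (a : 'I_n -> frac T) (x : frac T) : Prop :=
  exists r : 'I_n -> frac T, (forall i, frac_ok S (r i)) /\
    frac_eq S x (\big[@frac_add T/frac_zero T]_(i < n) frac_mul (r i) (a i)).

Definition loc_n_acc (T : comNzRingType) (S : pred T) (n : nat) : Prop :=
  forall a : nat -> 'I_n -> frac T,
    (forall k i, frac_ok S (a k i)) ->
    (forall k x, frac_ok S x -> loc_gen_ideal S (a k) x -> loc_gen_ideal S (a k.+1) x) ->
    exists N, forall k, (N <= k)%N -> forall x, frac_ok S x ->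
      (loc_gen_ideal S (a k) x <-> loc_gen_ideal S (a N) x).

Definition setA (R : comNzRingType) : pred {poly R} := fun f => f.[0] == 1.

(* Main.v *)
Require Import Defs.
From mathcomp Require Import all_boot all_order all_algebra.
Local Open Scope ring_scope.
From mathcomp Require Import ring.
Import GRing.Theory.

Section Aux.
Variables (R : comNzRingType) (n : nat).
Implicit Types (c : 'I_n -> R).

Definition polyideal c (y : {poly R}) :=
  exists q : 'I_n -> {poly R}, y = \sum_(i < n) q i * (c i)%:P.

Lemma pi0 c : polyideal c 0.
Proof. by exists (fun=> 0); rewrite big1 // => i _; rewrite mul0r. Qed.

Lemma piD c y z : polyideal c y -> polyideal c z -> polyideal c (y + z).
Proof.
move=> [q ->] [q' ->]; exists (fun i => q i + q' i).
by rewrite -big_split /=; apply: eq_bigr => i _; rewrite mulrDl.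
Qed.

Lemma piM c p y : polyideal c y -> polyideal c (p * y).
Proof.
move=> [q ->]; exists (fun i => p * q i).
by rewrite mulr_sumr; apply: eq_bigr => i _; rewrite mulrA.
Qed.

Lemma piC c i : polyideal c (c i)%:P.
Proof.
exists (fun j => if j == i then 1 else 0).
rewrite (bigD1 i) //= eqxx mul1r big1 ?addr0 // => j /negPf ->.
by rewrite mul0r.
Qed.

Lemma setAM (f g : {poly R}) : setA f -> setA g -> setA (f * g).
Proof. by rewrite /setA hornerM => /eqP -> /eqP ->; rewrite mulr1. Qed.

Lemma setA1 : setA (1 : {poly R}).
Proof. by rewrite /setA hornerC. Qed.

Definition bgen c : 'I_n -> Defs.frac {poly R} := fun i => ((c i)%:P, 1).

Lemma L1 c x : loc_gen_ideal (@setA R) (bgen c) x ->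
  exists2 v, setA v & polyideal c (v * x.1).
Proof.
move=> [r [ok [u Au]]].
set B := \big[_/_]_(i < n) _.
have [BA BI] : setA B.2 /\ polyideal c B.1.
  rewrite /B; apply: (big_ind (fun b : Defs.frac {poly R} => setA b.2 /\ polyideal c b.1)).
  - by split; [apply: setA1 | apply: pi0].
  - move=> [N1 D1] [N2 D2] /= [A1 I1] [A2 I2]; split; first exact: setAM.
    by apply: piD; rewrite mulrC; apply: piM.
  - move=> i _ /=; split; first by rewrite mulr1; apply: ok.
    by apply: piM; apply: piC.
move=> /eqP; rewrite mulrBr subr_eq0 => /eqP E.
exists (u * B.2); first exact: setAM.
have -> : u * B.2 * x.1 = u * x.2 * B.1 by rewrite mulrAC -mulrA E; ring.
by apply: piM.
Qed.

Lemma bigseq c (s : seq 'I_n) (F : 'I_n -> {poly R}) w :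
  let B := \big[@frac_add {poly R}/frac_zero {poly R}]_(i <- s) frac_mul (F i, w) ((c i)%:P, 1) in
  B.1 * w = B.2 * \sum_(i <- s) F i * (c i)%:P.
Proof.
elim: s => [|i s IH] /=; first by rewrite !big_nil /= mul0r mul1r.
rewrite !big_cons /= !mulr1 mulrDl -mulrA (mulrC _ w) IH.
ring.
Qed.

Lemma L2 c x v : setA x.2 -> setA v -> polyideal c (v * x.1) ->
  loc_gen_ideal (@setA R) (bgen c) x.
Proof.
move=> Ax Av [q E].
set w := v * x.2.
have Aw : setA w by apply: setAM.
exists (fun i => (q i, w)); split => // .
set B := \big[_/_]_(i < n) _.
have HB : B.1 * w = B.2 * \sum_(i < n) q i * (c i)%:P by apply: bigseq.
exists w => //.
apply/eqP; rewrite mulrBr subr_eq0; apply/eqP.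
rewrite -/w.
have -> : w * (B.1 * x.2) = x.2 * (B.1 * w) by ring.
rewrite HB -E /w; ring.
Qed.

Lemma L3 c c' y : (forall i, gen_ideal c' (c i)) -> polyideal c y -> polyideal c' y.
Proof.
move=> H [q ->].
apply: (big_ind (polyideal c')); [exact: pi0 | exact: piD |] => i _.
apply: piM; have [s ->] := H i.
rewrite rmorph_sum; apply: (big_ind (polyideal c')); [exact: pi0 | exact: piD |].
by move=> j _ /=; rewrite polyCM; apply: piM; apply: piC.
Qed.

Lemma L4 c v r : setA v -> polyideal c (v * r%:P) -> gen_ideal c r.
Proof.
move=> /eqP Av [q E]; exists (fun i => (q i).[0]).
have := congr1 (fun p => p.[0]) E; rewrite /= hornerM hornerC Av mul1r => ->.
by rewrite horner_sum; apply: eq_bigr => i _; rewrite hornerM hornerC.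
Qed.

Lemma L0 c r : gen_ideal c r -> polyideal c r%:P.
Proof.
move=> [s ->]; exists (fun i => (s i)%:P).
by rewrite rmorph_sum; apply: eq_bigr => i _ /=; rewrite polyCM.
Qed.

End Aux.

Theorem mainTheorem4 (R : comNzRingType) (n : nat) :
  (0 < n)%N -> loc_n_acc (@setA R) n -> n_acc R n.
Proof.
move=> _ H a Ha.
have [||N HN] := H (fun k => @bgen R n (a k)).
- by move=> k i; apply: setA1.
- move=> k x Ax /L1 [v Av P].
  apply: (@L2 R n (a k.+1) x v Ax Av); apply: (@L3 R n (a k) (a k.+1) _ _ P) => i.
  by apply: Ha; exists (fun j => if j == i then 1 else 0);
     rewrite (bigD1 i) //= eqxx mul1r big1 ?addr0 // => j /negPf ->; rewrite mul0r.
exists N => k Hk x.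
have A1 : setA (1 : {poly R}) := @setA1 R.
have E : forall m, gen_ideal (a m) x <-> loc_gen_ideal (@setA R) (@bgen R n (a m)) (x%:P, 1).
  move=> m; split.
  - by move=> /L0 P; apply: (@L2 R n (a m) (x%:P, 1) 1) => //=; rewrite mul1r.
  - by move=> /L1 [v Av P]; apply: (@L4 R n (a m) v x Av).
rewrite !E; exact: (HN k Hk (x%:P, 1) A1).
Qed.
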